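(* Let $\Sigma$ be a many-sorted signature and $S\subseteq\mathcal{S}_\Sigma$ with $|S|=1$. If a $\Sigma$-theory $\mathcal{T}$ has the finite model property with respect to $S$, then $\mathcal{T}$ is stably finite with respect to $S$.
   Context: A many-sorted signature $\Sigma$ has a countable set of sorts $\mathcal{S}_{\Sigma}$, countably many function and predicate symbols with arities over these sorts, and an equality symbol for each sort (interpreted as identity). A $\Sigma$-interpretation $\mathcal{A}$ is a $\Sigma$-structure (domain $\sigma^{\mathcal{A}}$ for each sort $\sigma$) together with values for all variables. A $\Sigma$-theory $\mathcal{T}$ is the class of all $\Sigma$-interpretations (the $\mathcal{T}$-interpretations) satisfying a given set of closed formulas; a formula is $\mathcal{T}$-satisfiable if some $\mathcal{T}$-interpretation satisfies it. $\mathcal{T}$ has the finite model property w.r.t. $S$ if every $\mathcal{T}$-satisfiable quantifier-free $\Sigma$-formula is satisfied by some $\mathcal{T}$-interpretation $\mathcal{A}$ with $\sigma^{\mathcal{A}}$ finite for each $\sigma\in S$. $\mathcal{T}$ is stably finite w.r.t. $S$ if for every quantifier-free $\Sigma$-formula $\phi$ and every $\mathcal{T}$-interpretation $\mathcal{A}$ satisfying $\phi$ there is a $\mathcal{T}$-interpretation $\mathcal{B}$ satisfying $\phi$ with $|\sigma^{\mathcal{B}}|$ finite and $|\sigma^{\mathcal{B}}|\le|\sigma^{\mathcal{A}}|$ for each $\sigma\in S$. *)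

(* Defs.v *)
From Stdlib Require Import List.
Import ListNotations.
Set Implicit Arguments.
Unset Strict Implicit.

Definition countable (X : Type) : Prop :=
  exists f : X -> nat, forall x y, f x = f y -> x = y.

Record signature := {
  sort : Type;
  fsym : Type;
  psym : Type;
  fdom : fsym -> list sort;
  fcod : fsym -> sort;
  pdom : psym -> list sort;
  sort_countable : countable sort;
  fsym_countable : countable fsym;
  psym_countable : countable psym
}.
Arguments fdom {_} _.
Arguments fcod {_} _.
Arguments pdom {_} _.

Section Syntax.
Variable Sig : signature.

Inductive term : sort Sig -> Type :=
| Var : forall (s : sort Sig), nat -> term s
| App : forall (f : fsym Sig), terms (fdom f) -> term (fcod f)
with terms : list (sort Sig) -> Type :=
| tnil : terms []
| tcons : forall (s : sort Sig) (l : list (sort Sig)), term s -> terms l -> terms (s :: l).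

Inductive formula : Type :=
| FEq : forall s : sort Sig, term s -> term s -> formula
| FPred : forall p : psym Sig, terms (pdom p) -> formula
| FTrue : formula
| FFalse : formula
| FNot : formula -> formula
| FAnd : formula -> formula -> formula
| FOr : formula -> formula -> formula
| FImp : formula -> formula -> formula
| FForall : sort Sig -> nat -> formula -> formula
| FExists : sort Sig -> nat -> formula -> formula.

Fixpoint quantifier_free (phi : formula) : Prop :=
  match phi with
  | FEq _ _ | FPred _ | FTrue | FFalse => True
  | FNot a => quantifier_free a
  | FAnd a b | FOr a b | FImp a b => quantifier_free a /\ quantifier_free b
  | FForall _ _ _ | FExists _ _ _ => False
  end.

Fixpoint term_has_var (s : sort Sig) (n : nat) (s' : sort Sig) (t : term s') : Prop :=
  match t with
  | Var s0 m => s0 = s /\ m = n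
  | App ts => terms_have_var s n ts
  end
with terms_have_var (s : sort Sig) (n : nat) (l : list (sort Sig)) (ts : terms l) : Prop :=
  match ts with
  | tnil => False
  | tcons t ts' => term_has_var s n t \/ terms_have_var s n ts'
  end.

Fixpoint free_in (s : sort Sig) (n : nat) (phi : formula) : Prop :=
  match phi with
  | FEq t u => term_has_var s n t \/ term_has_var s n u
  | FPred ts => terms_have_var s n ts
  | FTrue | FFalse => False
  | FNot a => free_in s n a
  | FAnd a b | FOr a b | FImp a b => free_in s n a \/ free_in s n b
  | FForall s' m a | FExists s' m a => free_in s n a /\ ~ (s' = s /\ m = n)
  end.

Definition closed (phi : formula) : Prop := forall s n, ~ free_in s n phi.

Fixpoint hlist (D : sort Sig -> Type) (l : list (sort Sig)) : Type :=
  match l with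
  | [] => unit
  | s :: l' => (D s * hlist D l')%type
  end.

Record structure := {
  dom : sort Sig -> Type;
  dom_nonempty : forall s, inhabited (dom s);
  finterp : forall f : fsym Sig, hlist dom (fdom f) -> dom (fcod f);
  pinterp : forall p : psym Sig, hlist dom (pdom p) -> Prop
}.

Definition valuation (M : structure) := forall s : sort Sig, nat -> dom M s.

Fixpoint eval_term (M : structure) (v : valuation M) (s : sort Sig) (t : term s)
  : dom M s :=
  match t in term s return dom M s with
  | Var s0 m => v s0 m
  | @App f ts => @finterp M f (eval_terms v ts)
  end
with eval_terms (M : structure) (v : valuation M) (l : list (sort Sig)) (ts : terms l)
  : hlist (dom M) l :=
  match ts in terms l return hlist (dom M) l with
  | tnil => tt
  | tcons t ts' => (eval_term v t, eval_terms v ts')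
  end.

Definition agree_except (M : structure) (s : sort Sig) (n : nat) (v v' : valuation M) : Prop :=
  forall s' m, ~ (s' = s /\ m = n) -> v' s' m = v s' m.

Fixpoint sat (M : structure) (v : valuation M) (phi : formula) : Prop :=
  match phi with
  | FEq t u => eval_term v t = eval_term v u
  | @FPred p ts => @pinterp M p (eval_terms v ts)
  | FTrue => True
  | FFalse => False
  | FNot a => ~ sat v a
  | FAnd a b => sat v a /\ sat v b
  | FOr a b => sat v a \/ sat v b
  | FImp a b => sat v a -> sat v b
  | FForall s n a => forall v' : valuation M, agree_except s n v v' -> sat v' a
  | FExists s n a => exists v' : valuation M, agree_except s n v v' /\ sat v' a
  end.

(** A Sigma-theory: the class of interpretations satisfying a given set of
    closed formulas (the axioms). *)
Record theory := {
  axioms : formula -> Prop;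
  axioms_closed : forall phi, axioms phi -> closed phi
}.

(** A Sigma-interpretation is a pair (M, v). *)
Definition T_interp (T : theory) (M : structure) (v : valuation M) : Prop :=
  forall psi, axioms T psi -> sat v psi.

Definition T_satisfiable (T : theory) (phi : formula) : Prop :=
  exists (M : structure) (v : valuation M), T_interp T v /\ sat v phi.

End Syntax.

Arguments Var {Sig} s _.
Arguments tnil {Sig}.

Definition finite_type (X : Type) : Prop := exists l : list X, forall x, In x l.
Definition card_le (X Y : Type) : Prop :=
  exists f : X -> Y, forall x y, f x = f y -> x = y.

Definition has_fmp (Sig : signature) (T : theory Sig) (S : sort Sig -> Prop) : Prop :=
  forall phi : formula Sig, quantifier_free phi -> T_satisfiable T phi ->
    exists (M : structure Sig) (v : valuation M),
      T_interp T v /\ sat v phi /\ forall s, S s -> finite_type (dom M s).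

Definition stably_finite (Sig : signature) (T : theory Sig) (S : sort Sig -> Prop) : Prop :=
  forall phi : formula Sig, quantifier_free phi ->
  forall (A : structure Sig) (vA : valuation A), T_interp T vA -> sat vA phi ->
    exists (B : structure Sig) (vB : valuation B),
      T_interp T vB /\ sat vB phi /\
      forall s, S s -> finite_type (dom B s) /\ card_le (dom B s) (dom A s).

(* Main.v *)
Require Import Defs.
From Stdlib Require Import List Classical ClassicalEpsilon.

Lemma aux (X Y : Type) (HY : ~ finite_type Y) :
  forall l : list X, exists f : X -> Y,
    forall x y, In x l -> In y l -> f x = f y -> x = y.
Proof.
  induction l as [|a l IH].
  - destruct (classic (inhabited Y)) as [[y]|HnY].
    + exists (fun _ => y); simpl; tauto.
    + exfalso; apply HY; exists nil; intro y; exfalso; apply HnY; constructor; exact y.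
  - destruct IH as [f Hf]. destruct (classic (In a l)) as [Hin|Hnin].
    + exists f. intros x y [<-|Hx] [<-|Hy] E; auto.
    + assert (Hex : exists y0, ~ In y0 (map f l)).
      { destruct (classic (exists y0, ~ In y0 (map f l))) as [H|H]; auto.
        exfalso; apply HY; exists (map f l); intro y.
        destruct (classic (In y (map f l))) as [H'|H']; auto.
        exfalso; apply H; eauto. }
      destruct Hex as [y0 Hy0].
      exists (fun x => if excluded_middle_informative (x = a) then y0 else f x).
      intros x y Hx Hy.
      destruct (excluded_middle_informative (x = a)) as [ea|na];
      destruct (excluded_middle_informative (y = a)) as [eb|nb]; intros E.
      * congruence.
      * destruct Hy as [Hy|Hy]; [congruence|].
        exfalso; apply Hy0; rewrite E; apply in_map; exact Hy.
      * destruct Hx as [Hx|Hx]; [congruence|].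
        exfalso; apply Hy0; rewrite <- E; apply in_map; exact Hx.
      * destruct Hx as [Hx|Hx]; [congruence|].
        destruct Hy as [Hy|Hy]; [congruence|]. auto.
Qed.

Theorem theorem4 (Sig : signature) (S : sort Sig -> Prop) (T : theory Sig) :
  (exists s0 : sort Sig, forall s, S s <-> s = s0) ->
  has_fmp T S -> stably_finite T S.
Proof.
  intros [s0 Hs] Hfmp phi Hqf A vA HT Hsat.
  destruct (classic (finite_type (dom A s0))) as [Hfin|Hinf].
  - exists A, vA. split; [|split]; auto. intros s HS. apply Hs in HS; subst.
    split; auto. exists (fun x => x); auto.
  - destruct (Hfmp phi Hqf (ex_intro _ A (ex_intro _ vA (conj HT Hsat))))
      as [B [vB [HB1 [HB2 HB3]]]].
    exists B, vB. split; [|split]; auto. intros s HS.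
    pose proof HS as HS'. apply Hs in HS'; subst.
    destruct (HB3 _ HS) as [l Hl]. split; [exists l; auto|].
    destruct (aux _ _ Hinf l) as [f Hf]. exists f. intros x y E. apply Hf; auto.
Qed.
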